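(* Consider the network with vertices $s_1,s_2,s_3,t$ and directed edges $(s_3,s_1),(s_3,s_2),(s_1,t),(s_2,t)$, where $\mathcal{A}=\mathcal{Z}=\{0,1\}$, the messages $X_1^k,X_2^k,X_3^k$ have all components i.i.d. uniform on $\{0,1\}$, and the demand function is $f(X_1,X_2,X_3)=X_1+X_2+X_3$ over $GF(2)$. Then every admissible rate tuple $(R_{31},R_{32},R_1,R_2)$ satisfies $R_{31}+R_{32}\ge1$, $R_1\ge1$, $R_2\ge1$ (and hence $(R_1+R_2)/2\ge1$). Conversely, for every positive integer $k$ and every integer $0\le c\le k$, the rate tuple $(c/k,\,1-c/k,\,1,\,1)$ is achieved by a zero-error source-network code; hence these lower bounds are tight.
   Context: A source-network code $\mathcal{C}_{f,k}$ consists of encoders $\phi_{(s_3,s_1)},\phi_{(s_3,s_2)}:\mathcal{A}^k\to\mathcal{Z}^*$, $\phi_{(s_1,t)},\phi_{(s_2,t)}:\mathcal{A}^k\times\mathcal{Z}^*\to\mathcal{Z}^*$ ($\mathcal{Z}^*$ = finite binary sequences) and a decoder $\psi_t:\mathcal{Z}^*\times\mathcal{Z}^*\to\{0,1\}^k$; $\mathbf{Z}_{31}=\phi_{(s_3,s_1)}(X_3^k)$, $\mathbf{Z}_{32}=\phi_{(s_3,s_2)}(X_3^k)$, $\mathbf{Z}_1=\phi_{(s_1,t)}(X_1^k,\mathbf{Z}_{31})$, $\mathbf{Z}_2=\phi_{(s_2,t)}(X_2^k,\mathbf{Z}_{32})$, and $\Pr\{\psi_t(\mathbf{Z}_1,\mathbf{Z}_2)\ne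 f(X_1^k,X_2^k,X_3^k)\}=0$, where $f$ is applied componentwise. A tuple $(R_{31},R_{32},R_1,R_2)$ is admissible if for every $\epsilon>0$ there exist a sufficiently large $k$ and such a code with $\log|\mathcal{Z}|\,\mathbb{E}\ell(\mathbf{Z}_e)\le k\log|\mathcal{A}|(R_e+\epsilon)$ for each $e\in\{31,32,1,2\}$, $\ell$ denoting length in symbols. A code achieves rate tuple $(r_{31},r_{32},r_1,r_2)$ if $\mathbb{E}\ell(\mathbf{Z}_e)=k r_e$ for each $e$ (here $|\mathcal{A}|=|\mathcal{Z}|=2$). *)

(* Defs.v *)
From HB Require Import structures.
From mathcomp Require Import all_boot all_order all_algebra.
From mathcomp Require Import reals.
Set Implicit Arguments. Unset Strict Implicit. Unset Printing Implicit Defensive.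
Import Order.TTheory GRing.Theory Num.Theory.
Local Open Scope ring_scope.

(* Alphabets A = Z = {0,1} are modelled by bool; GF(2) addition is addb (+).
   A block of k source symbols is a k.-tuple bool; Z^* (finite binary
   sequences) is seq bool, and the length l(.) is size. *)

Record snCode (k : nat) := SNCode {
  enc31 : k.-tuple bool -> seq bool;
  enc32 : k.-tuple bool -> seq bool;
  enc1  : k.-tuple bool -> seq bool -> seq bool;
  enc2  : k.-tuple bool -> seq bool -> seq bool;
  dec   : seq bool -> seq bool -> k.-tuple bool
}.

Definition outcome (k : nat) := (k.-tuple bool * k.-tuple bool * k.-tuple bool)%type.

Definition Z31 k (C : snCode k) (x : outcome k) : seq bool := enc31 C x.2.
Definition Z32 k (C : snCode k) (x : outcome k) : seq bool := enc32 C x.2.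
Definition Z1 k (C : snCode k) (x : outcome k) : seq bool := enc1 C x.1.1 (Z31 C x).
Definition Z2 k (C : snCode k) (x : outcome k) : seq bool := enc2 C x.1.2 (Z32 C x).

Definition fsum k (x : outcome k) : k.-tuple bool :=
  [tuple tnth x.1.1 i (+) tnth x.1.2 i (+) tnth x.2 i | i < k].

(* All components i.i.d. uniform on {0,1}: the law of the outcome is the
   uniform distribution on outcome k. *)
Definition Pr {R : realType} k (E : pred (outcome k)) : R :=
  #|[set x : outcome k | E x]|%:R / #|{: outcome k}|%:R.

Definition Expect {R : realType} k (g : outcome k -> nat) : R :=
  (\sum_(x : outcome k) (g x)%:R) / #|{: outcome k}|%:R.

Definition zero_error (R : realType) k (C : snCode k) : Prop :=
  Pr (R := R) (fun x => dec C (Z1 C x) (Z2 C x) != fsum x) = 0.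

Definition EL31 (R : realType) k (C : snCode k) : R := Expect (fun x => size (Z31 C x)).
Definition EL32 (R : realType) k (C : snCode k) : R := Expect (fun x => size (Z32 C x)).
Definition EL1  (R : realType) k (C : snCode k) : R := Expect (fun x => size (Z1 C x)).
Definition EL2  (R : realType) k (C : snCode k) : R := Expect (fun x => size (Z2 C x)).

(* Here |A| = |Z| = 2, so the factors log|Z| and log|A|
   coincide and cancel: the condition reads E l(Z_e) <= k (R_e + eps).
   "there exist a sufficiently large k" is read (as in Yeung's framework)
   as: for all sufficiently large k such a code exists. *)
Definition admissible (R : realType) (R31 R32 R1 R2 : R) : Prop :=
  forall eps : R, 0 < eps ->
  exists K : nat, forall k : nat, (K <= k)%N ->
  exists C : snCode k,
    [/\ zero_error R C,
        EL31 R C <= k%:R * (R31 + eps),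
        EL32 R C <= k%:R * (R32 + eps),
        EL1 R C <= k%:R * (R1 + eps) &
        EL2 R C <= k%:R * (R2 + eps)].

Definition achieves (R : realType) k (C : snCode k) (r31 r32 r1 r2 : R) : Prop :=
  [/\ EL31 R C = k%:R * r31, EL32 R C = k%:R * r32,
      EL1 R C = k%:R * r1 & EL2 R C = k%:R * r2].

(* Main.v *)
Require Import Defs.
From HB Require Import structures.
From mathcomp Require Import all_boot all_order all_algebra.
From mathcomp Require Import reals.
From mathcomp Require Import zify lra.
Import Order.TTheory GRing.Theory Num.Theory.


Lemma count_small (T U : finType) (F : T -> U * (seq bool * seq bool)) (m : nat) :
  injective F ->
  (#|[set x | size (F x).2.1 + size (F x).2.2 < m]| <= #|U| * m.+1 * m.+1 * 2 ^ m)%N.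
Proof.
move=> Finj.
pose G := fun x => ((F x).1, (inord (size (F x).2.1) : 'I_m.+1),
   (inord (size (F x).2.2) : 'I_m.+1),
   [tuple nth false ((F x).2.1 ++ (F x).2.2) i | i < m]).
set A := [set x | _].
have Ginj : {in A &, injective G}.
  move=> x y hx hy [e1 e2 e3 e4]; move: hx hy; rewrite /A !inE => hx hy.
  apply: Finj.
  have e4' : forall i : 'I_m, nth false ((F x).2.1 ++ (F x).2.2) i = nth false ((F y).2.1 ++ (F y).2.2) i.
    move=> i; have := congr1 (fun s => nth false s i) e4.
    by rewrite !(nth_map i); rewrite -?enumT ?size_enum_ord ?nth_ord_enum.
  clear e4; move: hx hy e1 e2 e3 e4'.
  case: (F x) => u [a b]; case: (F y) => u' [a' b'] /= hx hy e1 e2 e3 e4.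
  move: e2 e3 => /(congr1 val) e2 /(congr1 val) e3; rewrite /= !inordK in e2 e3; try lia.
  have ecat : a ++ b = a' ++ b'.
    apply: (@eq_from_nth _ false); first by rewrite !size_cat; lia.
    move=> i; rewrite size_cat => hi.
    have hi' : (i < m)%N by lia.
    exact: (e4 (Ordinal hi')).
  have ea : a = a'.
    by rewrite -(take_size_cat b (erefl (size a))) ecat (take_size_cat b' (esym e2)).
  subst a'; rewrite e1; congr (_, (_, _)).
  by have := congr1 (drop (size a)) ecat; rewrite !drop_size_cat.
rewrite -(card_in_imset Ginj).
apply: leq_trans (max_card _) _.
by rewrite !card_prod !card_ord card_tuple card_bool.
Qed.

Lemma sum_lb (T : finType) (w : T -> nat) (m B : nat) :
  (#|[set x | w x < m]| <= B)%N -> (m * (#|T| - B) <= \sum_x w x)%N.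
Proof.
move=> hB.
have h1 : (m * #|T| <= \sum_x w x + m * #|[set x | w x < m]|)%N.
  set S := [set x | w x < m].
  have ea : (\sum_(x : T) m = m * #|T|)%N by rewrite sum_nat_const mulnC.
  have eb : (\sum_(x in S) m = m * #|S|)%N by rewrite sum_nat_const mulnC.
  rewrite -ea -eb [X in (_ <= _ + X)%N]big_mkcond -big_split /=.
  apply: leq_sum => x _; rewrite /S inE; case: ltnP => //= h; lia.
rewrite mulnBr; have : (m * #|[set x | w x < m]| <= m * B)%N by rewrite leq_mul2l hB orbT.
lia.
Qed.

Lemma avg_lb (T U : finType) (F : T -> U * (seq bool * seq bool)) (m k : nat) :
  injective F -> #|T| = (#|U| * 2 ^ k)%N -> (m * (m.+1 * m.+1 * 2 ^ m) <= 2 ^ k)%N ->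
  ((m - 1) * #|T| <= \sum_x (size (F x).2.1 + size (F x).2.2))%N.
Proof.
move=> Finj hT hm.
have := @sum_lb _ (fun x => size (F x).2.1 + size (F x).2.2)%N _ _ (@count_small _ _ F m Finj).
set t := #|T|; set u := #|U|; set D := (m.+1 * m.+1 * 2 ^ m)%N.
have -> : (u * m.+1 * m.+1 * 2 ^ m = u * D)%N by rewrite /D !mulnA.
have hmD : (m * (u * D) <= t)%N by rewrite mulnCA /t hT leq_mul2l hm orbT.
rewrite mulnBr mulnBl mul1n; lia.
Qed.
Lemma sq_lt_pow j : (5 <= j -> j * j < 2 ^ j)%N.
Proof.
move=> h; have [n ->] : exists n, j = (n + 5)%N by exists (j - 5)%N; lia.
elim: n => [|n IH] //.
rewrite (_ : (n.+1 + 5 = (n + 5).+1)%N) // expnS; nia.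
Qed.

Local Open Scope ring_scope.

Lemma rate_ge1 (R : realType) (S : R) (P : nat -> R -> Prop) :
 (forall eps : R, 0 < eps -> exists K : nat, forall k, (K <= k)%N ->
    exists v, P k v /\ v <= k%:R * (S + eps)) ->
 (forall k m v, P k v -> (m * (m.+1 * m.+1 * 2 ^ m) <= 2 ^ k)%N -> ((m - 1)%N)%:R <= v) ->
 1 <= S.
Proof.
move=> hadm hlb; rewrite leNgt; apply/negP => hS.
set g := 1 - S; have g0 : 0 < g by rewrite subr_gt0.
have [K hK] := hadm (g / 2) ltac:(lra).
have gi0 : 0 < g^-1 by rewrite invr_gt0.
have hN := @archi_boundP _ g^-1 (ltW gi0).
set N := Num.Def.archi_bound _ in hN.
have hNg : 1 < N%:R * g.
  have hgg : g^-1 * g = 1 by rewrite mulVf // lt0r_neq0.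
  nra.
pose j := maxn 5 (maxn (8 * N + 8) K).
have hj5 : (5 <= j)%N by rewrite /j; lia.
have hjN : (8 * N + 8 <= j)%N by rewrite /j; lia.
have hjK : (K <= j)%N by rewrite /j; lia.
have hsq := @sq_lt_pow j hj5.
have h3 : (3 * j < 2 ^ j)%N by nia.
have hkK : (K <= 2 ^ j)%N by apply: leq_trans hjK (ltnW (ltn_expl _ _)).
have [v [hP hv]] := hK _ hkK.
pose m := (2 ^ j - 3 * j)%N.
have hm : (m * (m.+1 * m.+1 * 2 ^ m) <= 2 ^ (2 ^ j))%N.
  have -> : (2 ^ (2 ^ j) = (2 ^ j * 2 ^ j * 2 ^ j) * 2 ^ m)%N.
    by rewrite -!expnD; congr (_ ^ _)%N; rewrite /m; lia.
  rewrite !mulnA leq_mul2r; apply/orP; right.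
  have h1 : (m.+1 <= 2 ^ j)%N by rewrite /m; lia.
  by apply: leq_mul; [apply: leq_mul|]; lia.
have e1 : ((m - 1) + (3 * j + 1) = 2 ^ j)%N by rewrite /m; lia.
have hjj : ((8 * N + 8) * j <= j * j)%N by rewrite leq_mul2r hjN orbT.
have e2 : (N * (2 * (3 * j + 1)) + 1 <= 2 ^ j)%N by nia.
have hv2 := hlb _ _ _ hP hm.
clearbody N.
have ep : (2 ^ j)%:R = ((m - 1)%N)%:R + ((3 * j + 1)%N)%:R :> R by rewrite -e1 natrD.
have en : N%:R * (2 * ((3 * j + 1)%N)%:R) + 1 <= (2 ^ j)%:R :> R.
  by move: e2; rewrite -(ler_nat R) natrD natrM [X in _ * X]natrM.
rewrite ep in hv en.
have hS' : S = 1 - g by rewrite /g; lra.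
rewrite hS' in hv.
move: hv hv2 en hNg g0.
set a := ((m - 1)%N)%:R; set b := ((3 * j + 1)%N)%:R; set n := N%:R.
have b0 : 0 <= b by rewrite ler0n.
clearbody g; clearbody a b n; clear -b0.
move=> hv hv2 en hNg g0.
have h1 : 0 <= (a + b - n * (2 * b) - 1) * g by apply: mulr_ge0; lra.
have h2 : 0 <= (n * g - 1) * b by apply: mulr_ge0; lra.
nra.
Qed.

Lemma ze_all (R : realType) k (C : snCode k) : zero_error R C ->
  forall x, dec C (Z1 C x) (Z2 C x) = fsum x.
Proof.
rewrite /zero_error /Pr => /eqP; rewrite mulf_eq0 invr_eq0 !pnatr_eq0 => /orP [] /eqP h x.
  have := card0_eq h x; rewrite inE => /negbT; rewrite negbK => /eqP //.
by have := card0_eq h x.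
Qed.

Lemma fsum_pt k (a1 a2 a3 b1 b2 b3 : k.-tuple bool) :
  fsum (a1, a2, a3) = fsum (b1, b2, b3) ->
  forall i, tnth a1 i (+) tnth a2 i (+) tnth a3 i = tnth b1 i (+) tnth b2 i (+) tnth b3 i.
Proof.
move=> h i; have := congr1 (fun t => tnth t i) h.
by rewrite /fsum !tnth_mktuple.
Qed.

Lemma card_out k : #|{: outcome k}| = (#|{: k.-tuple bool * k.-tuple bool}| * 2 ^ k)%N.
Proof. by rewrite /outcome card_prod card_tuple card_bool. Qed.

Lemma card_out_gt0 k : (0 < #|{: outcome k}|)%N.
Proof. by rewrite /outcome !card_prod !card_tuple card_bool !muln_gt0 expn_gt0. Qed.

Lemma lb_gen (R : realType) k
  (F : outcome k -> (k.-tuple bool * k.-tuple bool) * (seq bool * seq bool))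
  (w : outcome k -> nat) m :
  injective F -> (forall x, w x = size (F x).2.1 + size (F x).2.2)%N ->
  (m * (m.+1 * m.+1 * 2 ^ m) <= 2 ^ k)%N -> ((m - 1)%N)%:R <= Expect (R := R) w.
Proof.
move=> Finj hw hm.
have := @avg_lb _ _ F m k Finj (card_out k) hm.
rewrite (eq_bigr w) => [|x _]; last by rewrite hw.
move=> h; rewrite /Expect -natr_sum ler_pdivlMr ?ltr0n ?card_out_gt0 // -natrM ler_nat.
exact: h.
Qed.

Lemma bool3 (a b c d : bool) : a (+) c (+) d = b (+) c (+) d -> a = b.
Proof. by case: a; case: b; case: c; case: d. Qed.
Lemma bool3' (a b c d : bool) : c (+) a (+) d = c (+) b (+) d -> a = b.
Proof. by case: a; case: b; case: c; case: d. Qed.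
Lemma bool3'' (a b c d : bool) : c (+) d (+) a = c (+) d (+) b -> a = b.
Proof. by case: a; case: b; case: c; case: d. Qed.

Lemma lower_bounds (R : realType) (R31 R32 R1 R2 : R) : admissible R31 R32 R1 R2 ->
  [/\ 1 <= R31 + R32, 1 <= R1 & 1 <= R2].
Proof.
move=> hadm; split.
- apply: (@rate_ge1 R (R31 + R32) (fun k v => exists C : snCode k, zero_error R C /\ v = EL31 R C + EL32 R C)).
  + move=> eps e0; have [K hK] := hadm (eps / 2) ltac:(lra); exists K => k hk.
    have [C [ze h31 h32 _ _]] := hK k hk; exists (EL31 R C + EL32 R C); split; first by exists C.
    lra.
  + move=> k m v [C [ze ->]] hm.
    have -> : EL31 R C + EL32 R C = Expect (R := R) (fun x => size (Z31 C x) + size (Z32 C x))%N.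
      rewrite /EL31 /EL32 /Expect -mulrDl -big_split /=; congr (_ / _).
      by apply: eq_bigr => x _; rewrite natrD.
    apply: (@lb_gen R k (fun x => ((x.1.1, x.1.2), (Z31 C x, Z32 C x))) _ m) => //=.
    move=> [[a1 a2] a3] [[b1 b2] b3] [e1 e2 e31 e32]; subst b1 b2.
    have hd : dec C (Z1 C (a1,a2,a3)) (Z2 C (a1,a2,a3)) = dec C (Z1 C (a1,a2,b3)) (Z2 C (a1,a2,b3)).
      by rewrite /Z1 /Z2 -/(Z31 C (a1,a2,a3)) -/(Z32 C (a1,a2,a3)) e31 e32.
    rewrite !(@ze_all _ _ _ ze) in hd; have hp := @fsum_pt _ _ _ _ _ _ _ hd.
    congr (_, _); apply: eq_from_tnth => i; exact: bool3'' (hp i).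
- apply: (@rate_ge1 R R1 (fun k v => exists C : snCode k, zero_error R C /\ v = EL1 R C)).
  + move=> eps e0; have [K hK] := hadm eps e0; exists K => k hk.
    have [C [ze _ _ h _]] := hK k hk; exists (EL1 R C); split => //; by exists C.
  + move=> k m v [C [ze ->]] hm.
    apply: (@lb_gen R k (fun x => ((x.1.2, x.2), (Z1 C x, [::]))) _ m) => //=;
      last by move=> x; rewrite addn0.
    move=> [[a1 a2] a3] [[b1 b2] b3] [e2 e3 e]; subst b2 b3.
    have hd : dec C (Z1 C (a1,a2,a3)) (Z2 C (a1,a2,a3)) = dec C (Z1 C (b1,a2,a3)) (Z2 C (b1,a2,a3)).
      by rewrite e.
    rewrite !(@ze_all _ _ _ ze) in hd; have hp := @fsum_pt _ _ _ _ _ _ _ hd.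
    congr (_, _, _); apply: eq_from_tnth => i; exact: bool3 (hp i).
- apply: (@rate_ge1 R R2 (fun k v => exists C : snCode k, zero_error R C /\ v = EL2 R C)).
  + move=> eps e0; have [K hK] := hadm eps e0; exists K => k hk.
    have [C [ze _ _ _ h]] := hK k hk; exists (EL2 R C); split => //; by exists C.
  + move=> k m v [C [ze ->]] hm.
    apply: (@lb_gen R k (fun x => ((x.1.1, x.2), (Z2 C x, [::]))) _ m) => //=;
      last by move=> x; rewrite addn0.
    move=> [[a1 a2] a3] [[b1 b2] b3] [e1 e3 e]; subst b1 b3.
    have hd : dec C (Z1 C (a1,a2,a3)) (Z2 C (a1,a2,a3)) = dec C (Z1 C (a1,b2,a3)) (Z2 C (a1,b2,a3)).
      by rewrite e.
    rewrite !(@ze_all _ _ _ ze) in hd; have hp := @fsum_pt _ _ _ _ _ _ _ hd.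
    congr (_, _, _); apply: eq_from_tnth => i; exact: bool3' (hp i).
Qed.

Definition mycode k c : snCode k := SNCode
  (fun x3 : k.-tuple bool => take c x3)
  (fun x3 : k.-tuple bool => drop c x3)
  (fun (x1 : k.-tuple bool) z => [seq tnth x1 i (+) nth false z i | i <- enum 'I_k])
  (fun (x2 : k.-tuple bool) z => [seq tnth x2 i (+) nth false (nseq c false ++ z) i | i <- enum 'I_k])
  (fun a b => [tuple nth false a i (+) nth false b i | i < k]).

Lemma nth_enum_map k (f : 'I_k -> bool) (i : 'I_k) :
  nth false [seq f j | j <- enum 'I_k] i = f i.
Proof. by rewrite (nth_map i) ?size_enum_ord // nth_ord_enum. Qed.

Lemma mycode_ok k c (x : outcome k) : (c <= k)%N ->
  dec (mycode k c) (Z1 (mycode k c) x) (Z2 (mycode k c) x) = fsum x.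
Proof.
move=> hc; case: x => [[x1 x2] x3]; apply: eq_from_tnth => i.
rewrite /fsum /Z1 /Z2 /Z31 /Z32 /= !tnth_mktuple !nth_enum_map.
rewrite (tnth_nth false x3).
case: (ltnP i c) => hi.
  rewrite nth_take // nth_cat size_nseq hi nth_nseq hi.
  by case: (tnth x1 i); case: (tnth x2 i); case: (nth false x3 i).
rewrite nth_default; last by rewrite size_takel ?size_tuple.
rewrite nth_cat size_nseq ltnNge hi /= nth_drop subnKC //.
by case: (tnth x1 i); case: (tnth x2 i); case: (nth false x3 i).
Qed.

Lemma Expect_const (R : realType) k (g : outcome k -> nat) n :
  (forall x, g x = n) -> Expect (R := R) g = n%:R.
Proof.
move=> hg; rewrite /Expect (eq_bigr (fun _ => n%:R)) => [|x _]; last by rewrite hg.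
rewrite sumr_const -[X in X / _]mulr_natr mulfK // pnatr_eq0 -lt0n.
exact: card_out_gt0.
Qed.

Lemma achievability (R : realType) (k c : nat) : (0 < k)%N -> (c <= k)%N ->
  exists C : snCode k,
    zero_error R C /\ achieves (R := R) C (c%:R / k%:R) (1 - c%:R / k%:R) 1 1.
Proof.
move=> hk hc; exists (mycode k c); split.
  rewrite /zero_error /Pr.
  have -> : [set x | dec (mycode k c) (Z1 (mycode k c) x) (Z2 (mycode k c) x) != fsum x] = set0.
    by apply/setP => x; rewrite !inE mycode_ok // eqxx.
  by rewrite cards0 mul0r.
have k0 : k%:R != 0 :> R by rewrite pnatr_eq0 -lt0n.
split.
- rewrite /EL31 (@Expect_const R k _ c) => [|x]; first by rewrite mulrC divfK.
  by rewrite /Z31 /= size_takel // size_tuple.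
- rewrite /EL32 (@Expect_const R k _ (k - c)) => [|x]; last by rewrite /Z32 /= size_drop size_tuple.
  by rewrite natrB // mulrBr mulr1 mulrC divfK.
- rewrite /EL1 (@Expect_const R k _ k) => [|x]; first by rewrite mulr1.
  by rewrite /Z1 /= size_map size_enum_ord.
- rewrite /EL2 (@Expect_const R k _ k) => [|x]; first by rewrite mulr1.
  by rewrite /Z2 /= size_map size_enum_ord.
Qed.

Theorem mainTheorem4 (R : realType) :
  (forall R31 R32 R1 R2 : R, admissible R31 R32 R1 R2 ->
     [/\ 1 <= R31 + R32, 1 <= R1, 1 <= R2 & 1 <= (R1 + R2) / 2])
  /\
  (forall k c : nat, (0 < k)%N -> (c <= k)%N ->
     exists C : snCode k,
       zero_error R C /\
       achieves (R := R) C (c%:R / k%:R) (1 - c%:R / k%:R) 1 1).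
Proof.
split.
  move=> R31 R32 R1 R2 h; have [h1 h2 h3] := @lower_bounds R R31 R32 R1 R2 h.
  split => //; rewrite ler_pdivlMr //; lra.
exact: achievability.
Qed.
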